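(* Let $(G=(V,E),w,k)$ be an instance of the Min-WED problem such that $0\le\min\{\min\{w(x):x\in V\},k\}$. Let $M=\max\{\sum_{x\in V}w(x),k\}+1$, let $w'(x)=M\cdot|N_G[x]|-w(x)$ for all $x\in V$, and let $k'=M\cdot|V|-k$. Then $(G,w,k)$ is a yes instance of the Min-WED problem if and only if $(G^2,w',k')$ is a yes instance of the MWIS problem.
   Context: All graphs are finite, simple and undirected. $N_G[x]$ is the closed neighborhood of $x$ in $G$ (the neighbors of $x$ together with $x$). A vertex dominates itself and its neighbors. An efficient dominating set of $G=(V,E)$ is a set $D\subseteq V$ such that every vertex of $V$ is dominated by exactly one vertex of $D$. The square $G^2=(V,E^2)$ has distinct $u,v$ adjacent iff $uv\in E$ or $u,v$ have a common neighbor in $G$. Min-WED: given $G=(V,E)$, $w:V\to\mathbb{Z}$ and an integer $k$, decide whether $G$ has an efficient dominating set $D$ with $\sum_{x\in D}w(x)\le k$. MWIS: given a graph $H$, weights $w':V(H)\to\mathbb{Z}$ and an integer $k'$, decide whether $H$ has an independent set $I$ with $\sum_{x\in I}w'(x)\ge k'$. *)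

(* Defs.v *)
From mathcomp Require Import all_boot all_order all_algebra.
Set Implicit Arguments. Unset Strict Implicit. Unset Printing Implicit Defensive.
Import Order.TTheory GRing.Theory Num.Theory.
Local Open Scope ring_scope.

Definition simple_graph (T : finType) (e : rel T) : Prop :=
  symmetric e /\ irreflexive e.

Definition closed_nbhd (T : finType) (e : rel T) (x : T) : {set T} :=
  [set y | (y == x) || e x y].

Definition efficient_dominating (T : finType) (e : rel T) (D : {set T}) : Prop :=
  forall v : T, #|[set d in D | v \in closed_nbhd e d]| = 1%N.

Definition sq_rel (T : finType) (e : rel T) : rel T :=
  fun u v => (u != v) && (e u v || [exists z, e u z && e z v]).

Definition independent (T : finType) (h : rel T) (I : {set T}) : Prop :=
  forall u v, u \in I -> v \in I -> ~~ h u v.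

Definition minWED_yes (T : finType) (e : rel T) (w : T -> int) (k : int) : Prop :=
  exists D : {set T}, efficient_dominating e D /\ \sum_(x in D) w x <= k.

Definition MWIS_yes (T : finType) (h : rel T) (w' : T -> int) (k' : int) : Prop :=
  exists I : {set T}, independent h I /\ k' <= \sum_(x in I) w' x.

(* Main.v *)
Require Import Defs.
From mathcomp Require Import all_boot all_order all_algebra.
From mathcomp Require Import zify.
Import Order.TTheory GRing.Theory Num.Theory.
Local Open Scope ring_scope.

Lemma PoszSum (T : finType) (P : pred T) (F : T -> nat) :
  Posz (\sum_(i | P i) F i)%N = \sum_(i | P i) (F i)%:Z.
Proof. exact: (big_morph Posz PoszD (erefl (Posz 0))). Qed.

Lemma dcount (T : finType) (e : rel T) (D : {set T}) :
  (\sum_(d in D) #|closed_nbhd e d| =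
   \sum_v #|[set d in D | v \in closed_nbhd e d]|)%N.
Proof.
under eq_bigr do rewrite -sum1_card.
under [RHS]eq_bigr do rewrite -sum1_card.
rewrite (exchange_big_dep predT) //=.
by apply: eq_bigr => v _; apply: eq_bigl => d; rewrite !inE.
Qed.

Lemma lt_card (T : finType) (f : T -> nat) (v : T) :
  (forall u, f u <= 1)%N -> f v = 0%N -> (\sum_u f u < #|T|)%N.
Proof.
move=> H1 H0.
rewrite (bigD1 v) //= H0 add0n.
have : (\sum_(u | u != v) f u <= \sum_(u | u != v) 1)%N by apply: leq_sum.
rewrite sum1_card.
have -> : #|[pred u | u != v]| = #|predC1 v| by apply: eq_card.
rewrite cardC1.
have : (0 < #|T|)%N by apply/card_gt0P; exists v.
by move=> h0 h; apply: (leq_ltn_trans h); rewrite prednK.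
Qed.

Lemma indep_le1 (T : finType) (e : rel T) (I : {set T}) :
  simple_graph e -> independent (sq_rel e) I ->
  forall v, (#|[set d in I | v \in closed_nbhd e d]| <= 1)%N.
Proof.
move=> [sym irr] ind v.
apply/card_le1_eqP => d1 d2; rewrite !inE => /andP[i1 n1] /andP[i2 n2].
apply/eqP; apply/negPn/negP => ne.
have := ind _ _ i1 i2; rewrite /sq_rel eq_sym ne /=.
case/orP: n1 => [/eqP ? | a1]; case/orP: n2 => [/eqP ? | a2]; subst.
- by rewrite eqxx in ne.
- by rewrite sym a2.
- by rewrite a1.
- rewrite negb_or => /andP[_ /existsP []]; exists v.
  by rewrite a1 sym a2.
Qed.

Theorem lemma5 (T : finType) (e : rel T) (w : T -> int) (k : int) :
  simple_graph e ->
  (forall x : T, 0 <= w x) -> 0 <= k ->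
  let M : int := Num.max (\sum_(x : T) w x) k + 1 in
  let w' : T -> int := fun x => M * (#|closed_nbhd e x|)%:Z - w x in
  let k' : int := M * (#|T|)%:Z - k in
  minWED_yes e w k <-> MWIS_yes (sq_rel e) w' k'.
Proof.
move=> sg w0 k0 M w' k'.
have Mk : k + 1 <= M by rewrite lerD2r le_max lexx orbT.
have sumw' : forall D : {set T}, \sum_(x in D) w' x =
   M * (Posz (\sum_v #|[set d in D | v \in closed_nbhd e d]|)%N) - \sum_(x in D) w x.
  move=> D; rewrite /w' sumrB -mulr_sumr -dcount PoszSum //.
split.
- move=> [D [eff le]]; exists D; split.
  + move=> u v uD vD; apply/negP => /andP[ne].
    case/orP => [euv | /existsP [z /andP [euz ezv]]].
    * have := eff v; move/eqP/cards1P => [d hd].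
      have : u \in [set d in D | v \in closed_nbhd e d] by rewrite !inE uD euv orbT.
      have : v \in [set d in D | v \in closed_nbhd e d] by rewrite !inE vD eqxx.
      rewrite hd !inE => /eqP h1 /eqP h2; by rewrite h1 h2 eqxx in ne.
    * have := eff z; move/eqP/cards1P => [d hd].
      have : u \in [set d in D | z \in closed_nbhd e d].
        by rewrite !inE uD euz orbT.
      have : v \in [set d in D | z \in closed_nbhd e d] by rewrite !inE vD (proj1 sg) ezv orbT.
      rewrite hd !inE => /eqP h1 /eqP h2; by rewrite h1 h2 eqxx in ne.
  + rewrite sumw' (eq_bigr (fun _ => 1%N)) ?sum1_card ?card_ord //.
    by rewrite /k'; apply: lerD => //; rewrite lerN2.
- move=> [I [ind le]]; exists I.
  have wI : 0 <= \sum_(x in I) w x by apply: sumr_ge0.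
  have H1 := @indep_le1 _ _ I sg ind.
  suff all1 : forall v, #|[set d in I | v \in closed_nbhd e d]| = 1%N.
    split => //.
    move: le; rewrite sumw' (eq_bigr (fun _ => 1%N)) ?sum1_card // /k'.
    by rewrite lerD2l lerN2.
  move=> v; apply/eqP; rewrite eqn_leq H1 /= card_gt0; apply/negP => /eqP h0.
  have hlt : (#|[set d in I | v \in closed_nbhd e d]| = 0)%N by rewrite h0 cards0.
  have lt := @lt_card _ _ v H1 hlt.
  move: le; rewrite sumw' /k'.
  set S := (\sum_v _)%N in lt *.
  move: lt; set n := #|T|; move=> lt le.
  have : M * Posz S <= M * Posz (n - 1)%N.
    apply: ler_wpM2l; first lia.
    rewrite lez_nat; lia.
  move: wI le Mk k0 lt; set s := \sum_(x in I) w x.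
  clearbody M s S n. clear.
  nia.
Qed.
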